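(* For every integer $k \geq 2$ there exists a $\chi_\rho$-critical tree $T$ with $\chi_{\rho}(T)=k$.
   Context: A $k$-packing coloring of a graph $G$ is a map $c:V(G)\to\{1,\ldots,k\}$ such that two distinct vertices $u,v$ with $c(u)=c(v)=i$ satisfy $d_G(u,v)>i$; $\chi_\rho(G)$ is the smallest $k$ for which such a coloring exists. $G$ is $\chi_\rho$-critical if $\chi_\rho(H)<\chi_\rho(G)$ for every proper subgraph $H$ of $G$. *)

(* Defs.v *)
(* Finite simple graphs: a symmetric irreflexive relation
   e : rel T on a finType T. *)
From mathcomp Require Import all_boot.
Set Implicit Arguments. Unset Strict Implicit. Unset Printing Implicit Defensive.

Section Graphs.
Variable T : finType.

Definition subgraph (e : rel T) (S : {set T}) (f : rel T) : Prop :=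
  symmetric f /\ (forall x y, f x y -> [&& x \in S, y \in S & e x y]).

Definition proper_subgraph (e : rel T) (S : {set T}) (f : rel T) : Prop :=
  subgraph e S f /\ (S != setT \/ exists x y, e x y && ~~ f x y).

Definition dist_le (f : rel T) (n : nat) (u v : T) : Prop :=
  exists s : seq T, size s <= n /\ path f u s /\ last u s = v.

(* c is a k-packing coloring of the graph (S, f). The condition
   d(u,v) > i is expressed as "not d(u,v) <= i" (distance is +oo for
   vertices in different components). *)
Definition packing_coloring (S : {set T}) (f : rel T) (k : nat) (c : T -> nat) : Prop :=
  (forall x, x \in S -> 1 <= c x <= k) /\
  (forall u v, u \in S -> v \in S -> u != v -> c u = c v -> ~ dist_le f (c u) u v).

Definition packing_colorable (S : {set T}) (f : rel T) (k : nat) : Prop :=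
  exists c : T -> nat, packing_coloring S f k c.

Definition chi_rho_eq (S : {set T}) (f : rel T) (k : nat) : Prop :=
  packing_colorable S f k /\ (forall j, j < k -> ~ packing_colorable S f j).

Definition chi_rho_critical (e : rel T) : Prop :=
  forall (S : {set T}) (f : rel T), proper_subgraph e S f ->
    forall j k, chi_rho_eq S f j -> chi_rho_eq setT e k -> j < k.

Definition acyclic (e : rel T) : Prop :=
  forall c : seq T, uniq c -> 2 < size c -> ~~ cycle e c.

Definition is_tree (e : rel T) : Prop :=
  symmetric e /\ irreflexive e /\ 0 < #|T| /\
  (forall x y, connect e x y) /\ acyclic e.

End Graphs.

(* Main.v *)
Require Import Defs.
From mathcomp Require Import all_boot.
From Stdlib Require Import Classical.
From mathcomp Require Import zify.
Set Implicit Arguments. Unset Strict Implicit. Unset Printing Implicit Defensive.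

Lemma colorable_mono (U : finType) (S : {set U}) (f : rel U) j j' :
  j <= j' -> packing_colorable S f j -> packing_colorable S f j'.
Proof.
move=> hj [c [h1 h2]]; exists c; split=> // x /h1 /andP[-> h]; exact: leq_trans h hj.
Qed.

Lemma chi_unique (U : finType) (S : {set U}) (f : rel U) a b :
  chi_rho_eq S f a -> chi_rho_eq S f b -> a = b.
Proof.
move=> [ca na] [cb nb]; apply/eqP; rewrite eqn_leq.
have h1 : ~~ (a < b) by apply/negP => h; exact: nb _ h ca.
have h2 : ~~ (b < a) by apply/negP => h; exact: na _ h cb.
by rewrite -!leqNgt in h1 h2; rewrite h1 h2.
Qed.

Lemma noedge_col1 (U : finType) (g : rel U) :
  (forall a b, ~~ g a b) -> packing_colorable setT g 1.
Proof.
move=> H; exists (fun _ => 1); split => // u v _ _ neq _ [s [hs [hp hl]]].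
case: s hs hp hl => [|y [|? ?]] //= _.
- by move=> _ huv; rewrite huv eqxx in neq.
- by rewrite andbT (negbTE (H u y)).
Qed.

Lemma shortcut (U : finType) (g : rel U) x w : symmetric g ->
  (forall y, g x y -> y = w) ->
  forall n u s, size s <= n -> u != x -> path g u s -> last u s != x ->
  exists s', size s' <= size s /\
    path [rel a b | [&& g a b, a != x & b != x]] u s' /\ last u s' = last u s.
Proof.
move=> sym hw; elim=> [|n IH] u s.
  by case: s => // _ _ _ _; exists [::].
case: s => [|y s1] hs hu hp hl; first by exists [::].
move: hp => /= /andP[guy hp].
case: (eqVneq y x) => [ey | hy].
- subst y; case: s1 hs hp hl => [|z s2] hs; first by rewrite /= eqxx.
  move=> /= /andP[gxz hp] hl.
  have ez := hw _ gxz; have eu : u = w by apply: hw; rewrite sym.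
  subst z; rewrite -eu in hp hl *.
  have [s' [h1 [h2 h3]]] := IH u s2 (leq_trans (leqnSn _) hs) hu hp hl.
  exists s'; split => //; apply: leq_trans h1 _; exact: leq_trans (leqnSn _) (leqnSn _).
- have [s' [h1 [h2 h3]]] := IH y s1 hs hy hp hl.
  by exists (y :: s'); rewrite /= guy hu hy h2 h3.
Qed.

Lemma leaf_aux (U : finType) (g : rel U) : symmetric g -> irreflexive g -> acyclic g ->
  forall m x s, #|U| <= size s + m -> uniq (x :: s) -> path g x s -> s != [::] ->
  exists x w, g x w /\ forall y, g x y -> y = w.
Proof.
move=> sym irr acy; elim=> [|m IH] x [|w t] // hm hu0 hp0 _;
  move: (hu0) (hp0) => /= /andP[hx hu] /andP[gxw hp].
all: case: (boolP [exists y, g x y && (y != w)]) => [/existsP [y /andP[gy ny]] | none];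
  last first.
1,3: by exists x, w; split => // y gy; apply/eqP; apply: contraNT none => ny;
  apply/existsP; exists y; rewrite gy ny.
all: have yx : y != x by apply: contraTneq gy => ->; rewrite irr.
all: case: (boolP (y \in x :: w :: t)) => hy.
2: have huy : uniq (y :: x :: w :: t) by rewrite cons_uniq hy hu0.
2: by move/card_uniqP: huy => hc; have := max_card (mem (y :: x :: w :: t)); rewrite hc /=; move: hm; rewrite addn0 /=; lia.
3: { apply: (IH y (x :: w :: t)).
     - by move: hm => /=; lia.
     - by rewrite cons_uniq hy hu0.
     - by rewrite /= sym gy gxw hp.
     - by []. }
all: move: hy; rewrite !inE (negbTE yx) (negbTE ny) /= => yt.
all: case/splitPr: yt hu hp hx => t1 t2 hu hp hx.
all: exfalso; apply: (negP (acy (x :: w :: rcons t1 y) _ _)).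
all: try (by rewrite /= size_rcons).
all: try (have hb : uniq ((x :: w :: rcons t1 y) ++ t2) by
      rewrite !cat_cons cat_rcons cons_uniq hx; exact: hu);
     try (by move: hb; rewrite cat_uniq => /andP[]).
all: rewrite /= !rcons_path last_rcons gxw (sym y x) gy andbT.
all: by move: hp; rewrite cat_path /= => /and3P[-> -> _].
Qed.

Lemma leaf_exists (U : finType) (g : rel U) : symmetric g -> irreflexive g -> acyclic g ->
  forall a b, g a b -> exists x w, g x w /\ forall y, g x y -> y = w.
Proof.
move=> sym irr acy a b gab; apply: (leaf_aux sym irr acy (m := #|U|) (x := a) (s := [:: b])) => //=.
- by rewrite inE andbT; apply: contraTneq gab => ->; rewrite irr.
- by rewrite gab.
Qed.

Lemma restrict_path (U : finType) (g : rel U) (P : pred U) :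
  (forall a b, g a b -> P a -> P b) ->
  forall s u, P u -> path g u s ->
    path [rel a b | [&& g a b, P a & P b]] u s /\ P (last u s).
Proof.
move=> hP; elim=> [|y s IH] u hu //= /andP[guy hp].
have hy := hP _ _ guy hu.
have [h1 h2] := IH y hy hp.
by rewrite guy hu hy h1.
Qed.

Lemma crit_of_min (U : finType) (g : rel U) k : 2 <= k -> symmetric g ->
  irreflexive g -> acyclic g ->
  ~ packing_colorable setT g k.-1 ->
  (forall S f, proper_subgraph g S f -> packing_colorable S f k.-1) ->
  is_tree g /\ chi_rho_eq setT g k /\ chi_rho_critical g.
Proof.
move=> hk sym irr acy hnc hmin.
have [a [b gab]] : exists a b, g a b.
  apply: NNPP => hne; apply: hnc; apply: (@colorable_mono _ _ _ 1); first by lia.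
  apply: noedge_col1 => a b; apply/negP => gab; apply: hne; by exists a, b.
have colk : packing_colorable setT g k.
  have [x [w [gxw hw]]] := leaf_exists sym irr acy gab.
  pose f := [rel a b | [&& g a b, a != x & b != x]].
  have hp : proper_subgraph g [set~ x] f.
    split; last by left; apply/eqP => /setP /(_ x); rewrite !inE eqxx.
    split.
      by move=> u v /=; rewrite sym; case: (u != x); case: (v != x); rewrite ?andbF.
    by move=> u v /and3P[guv ux vx]; rewrite !in_setC1 ux vx guv.
  have [c [hc1 hc2]] := hmin _ _ hp.
  exists (fun z => if z == x then k else c z); split.
    move=> z _; case: (eqVneq z x) => [_|zx]; first by lia.
    have := hc1 z; rewrite in_setC1 zx => /(_ isT); lia.
  move=> u v _ _ neq.
  case: (eqVneq u x) => [ux|ux]; case: (eqVneq v x) => [vx|vx].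
  - by rewrite ux vx eqxx in neq.
  - move=> eqc; have := hc1 v; rewrite in_setC1 vx -eqc => /(_ isT); lia.
  - move=> eqc; have := hc1 u; rewrite in_setC1 ux eqc => /(_ isT); lia.
  move=> eqc [s [hs [hpath hl]]].
  have hl' : last u s != x by rewrite hl.
  have [s' [h1 [h2 h3]]] := shortcut sym hw (leqnn (size s)) ux hpath hl'.
  apply: (hc2 u v); rewrite ?in_setC1 //.
  by exists s'; split; [apply: leq_trans hs | split => //; rewrite h3].
have chik : chi_rho_eq setT g k.
  split => // j hj hcol; apply: hnc; apply: colorable_mono hcol; lia.
split; last split => //.
  split => //; split => //; split.
    by apply/card_gt0P; exists a.
  split => //.
  move=> x y; apply: NNPP => /negP hxy.
  pose C := [set z | connect g x z].
  have hC : forall a b, g a b -> a \in C -> b \in C.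
    move=> u v guv; rewrite !inE => hu; apply: connect_trans hu _.
    exact: connect1.
  have hD : forall a b, g a b -> a \in ~: C -> b \in ~: C.
    move=> u v guv; rewrite !in_setC; apply: contra => hv.
    by apply: (hC v) hv; rewrite sym.
  have xC : x \in C by rewrite inE connect0.
  have yC : y \notin C by rewrite inE.
  pose fC := [rel a b | [&& g a b, (fun z => z \in C) a & (fun z => z \in C) b]].
  pose fD := [rel a b | [&& g a b, (fun z => z \in ~: C) a & (fun z => z \in ~: C) b]].
  have sub_gen : forall P : {set U}, subgraph g P [rel a b | [&& g a b, a \in P & b \in P]].
    move=> P; split.
      by move=> u v /=; rewrite sym; case: (u \in P); case: (v \in P); rewrite ?andbF.
    by move=> u v /and3P[guv ux vx]; rewrite ux vx guv.
  have pC : proper_subgraph g C fC.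
    split; first exact: sub_gen.
    by left; apply/eqP => /setP /(_ y); rewrite in_setT (negbTE yC).
  have pD : proper_subgraph g (~: C) fD.
    split; first exact: sub_gen.
    by left; apply/eqP => /setP /(_ x); rewrite in_setT in_setC xC.
  have [cC [hC1 hC2]] := hmin _ _ pC.
  have [cD [hD1 hD2]] := hmin _ _ pD.
  apply: hnc; exists (fun z => if z \in C then cC z else cD z); split.
    move=> z _; case: (boolP (z \in C)) => hz; first exact: hC1.
    by apply: hD1; rewrite in_setC.
  move=> u v _ _ neq; case: (boolP (u \in C)) => hu.
    move=> eqc [s [hs [hpath hl]]].
    have [h1 h2] := restrict_path hC hu hpath.
    rewrite hl in h2; rewrite h2 in eqc.
    apply: (hC2 u v hu h2 neq eqc); exists s; split => //.
  have hu' : u \in ~: C by rewrite in_setC.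
  move=> eqc [s [hs [hpath hl]]].
  have [h1 h2] := restrict_path hD hu' hpath.
  rewrite hl in h2; have h2' := h2; rewrite in_setC in h2'; rewrite (negbTE h2') in eqc.
  apply: (hD2 u v hu' h2 neq eqc); exists s; split => //.
move=> S f hp j k' [cj nj] hk'.
have ck := hmin S f hp.
have hj : j <= k.-1 by case: leqP => // /nj.
rewrite -(chi_unique chik hk'); lia.
Qed.

Lemma lift_path (U : finType) (S : {set U}) (f : rel U) :
  (forall a b, f a b -> (a \in S) && (b \in S)) ->
  forall s u (hu : u \in S), path f u s ->
  exists s' : seq {x : U | x \in S}, map val s' = s /\
    path (fun a b : {x : U | x \in S} => f (val a) (val b)) (exist _ u hu) s'.
Proof.
move=> fS; elim=> [|y s IH] u hu /=; first by exists [::].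
move=> /andP[fuy hp].
have /andP[_ hy] := fS _ _ fuy.
have [s' [h1 h2]] := IH y hy hp.
by exists (exist _ y hy :: s'); rewrite /= h1 fuy h2.
Qed.

Lemma main_gen k : 2 <= k -> forall n (U : finType) (g : rel U),
  #|U| + #|[set p : U * U | g p.1 p.2]| <= n ->
  symmetric g -> irreflexive g -> acyclic g ->
  ~ packing_colorable setT g k.-1 ->
  exists (T : finType) (e : rel T),
    is_tree e /\ chi_rho_eq [set: T] e k /\ chi_rho_critical e.
Proof.
move=> hk; elim=> [|n IH] U g hn sym irr acy hnc.
  apply: False_ind; apply: hnc; exists (fun _ => 1); split.
    move=> x; have : 0 < #|U| by apply/card_gt0P; exists x.
    lia.
  move=> u; have : 0 < #|U| by apply/card_gt0P; exists u.
  lia.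
case: (classic (forall S f, proper_subgraph g S f -> packing_colorable S f k.-1))
  => [hall | hex].
  by exists U, g; apply: crit_of_min.
have [S hS] := not_all_ex_not _ _ hex.
have [f hf] := not_all_ex_not _ _ hS.
have [[[fsym fsub] hprop] hncS] := imply_to_and _ _ hf.
pose U' : finType := {x : U | x \in S}.
pose g' : rel U' := fun a b => f (val a) (val b).
have fg : forall a b, f a b -> g a b by move=> a b /fsub /and3P[].
have fS : forall a b, f a b -> (a \in S) && (b \in S) by move=> a b /fsub /and3P[-> ->].
apply: (IH U' g').
- have cU' : #|U'| = #|S| by rewrite card_sig; apply: eq_card => x; rewrite inE.
  have hSU : #|S| <= #|U| := max_card _.
  have hE' : #|[set p : U' * U' | g' p.1 p.2]| <= #|[set p : U * U | f p.1 p.2]|.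
    pose h := fun p : U' * U' => (val p.1, val p.2).
    have hinj : injective h by move=> [a b] [a' b'] [/val_inj -> /val_inj ->].
    rewrite -(card_imset _ hinj); apply: subset_leq_card; apply/subsetP => q.
    by case/imsetP => p; rewrite inE => hp ->; rewrite inE.
  have sEf : [set p : U * U | f p.1 p.2] \subset [set p : U * U | g p.1 p.2].
    by apply/subsetP => p; rewrite !inE => /fg.
  have hEf := subset_leq_card sEf.
  case: hprop => [hne | [x [y /andP[gxy nf]]]].
    have := proper_card (A := S) (B := setT); rewrite properT cardsT => /(_ hne).
    lia.
  have : [set p : U * U | f p.1 p.2] \proper [set p : U * U | g p.1 p.2].
    by apply/properP; split => //; exists (x, y); rewrite inE.
  move/proper_card; lia.
- by move=> a b; apply: fsym.
- by move=> a; apply/negP => /fg; rewrite irr.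
- move=> c hu hs; apply/negP => hc.
  apply: (negP (acy (map val c) _ _)).
  + by rewrite (map_inj_uniq val_inj).
  + by rewrite size_map.
  + by rewrite cycle_map; apply: sub_cycle hc => a b /fg.
- move=> [c' [h1 h2]]; apply: hncS.
  exists (fun x => if insub x is Some x' then c' x' else 1); split.
    by move=> x hx; rewrite (@insubT _ (fun x => x \in S) U' x hx); apply: h1; rewrite in_setT.
  move=> u v hu hv neq; rewrite (@insubT _ (fun x => x \in S) U' u hu) (@insubT _ (fun x => x \in S) U' v hv) => eqc [s [hs [hp hl]]].
  have [s' [m1 m2]] := lift_path fS hu hp.
  apply: (h2 (exist _ u hu) (exist _ v hv)) => //.
  exists s'; split; first by rewrite -(size_map val) m1.
  split => //; apply: val_inj => /=; rewrite -hl -m1 -(last_map val) //.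
Qed.

Lemma par_acyclic (U : finType) (par : U -> option U) (dep : U -> nat) :
  (forall x y, par x = Some y -> dep x = (dep y).+1) ->
  acyclic [rel a b | (par a == Some b) || (par b == Some a)].
Proof.
move=> hd c; set e := [rel a b | _].
have key : forall a b, e a b -> dep b <= dep a -> par a = Some b.
  move=> a b /orP[/eqP -> // | /eqP /hd ->]; by rewrite ltnn.
have esym : forall a b, e a b -> e b a by move=> a b; rewrite /e /= orbC.
case: c => [|x0 c1] // hu hs; apply/negP => hc.
case: (@arg_maxnP _ x0 (fun z => z \in x0 :: c1) dep); first by rewrite mem_head.
move=> x hx hmax.
case: (rot_to hx) => i s' hrot.
have hc' : cycle e (x :: s') by rewrite -hrot rot_cycle.
have hu' : uniq (x :: s') by rewrite -hrot rot_uniq.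
have hs' : 2 < size (x :: s') by rewrite -hrot size_rot.
have hmax' : forall z, z \in x :: s' -> dep z <= dep x.
  by move=> z; rewrite -hrot mem_rot => /hmax.
case: s' hc' hu' hs' hmax' {hrot} => [|y [|z t]] // hc' hu' _ hmax'.
move: hc'; rewrite [cycle _ _]/= rcons_path => /and4P[exy _ _ elx].
have hy : y \in [:: x, y, z & t] by rewrite !inE eqxx orbT.
have py := key _ _ exy (hmax' y hy).
have hl : last z t \in z :: t := mem_last z t.
have hl2 : last z t \in [:: x, y, z & t] by rewrite inE [_ \in y :: _]inE hl !orbT.
have pl := key _ _ (esym _ _ elx) (hmax' _ hl2).
rewrite py in pl; case: pl => eyl.
by rewrite -eyl in hl; move: hu'; rewrite /= hl !andbF.
Qed.

Definition V (n : nat) : finType :=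
  ((unit + 'I_n.+2) + ('I_n.+2 * 'I_3 + 'I_n.+2 * 'I_3 * 'I_n.+2))%type.

Definition vR n : V n := inl (inl tt).
Definition vA n (i : 'I_n.+2) : V n := inl (inr i).
Definition vB n (i : 'I_n.+2) (j : 'I_3) : V n := inr (inl (i, j)).
Definition vC n (i : 'I_n.+2) (j : 'I_3) (l : 'I_n.+2) : V n := inr (inr (i, j, l)).

Definition parV n (v : V n) : option (V n) :=
  match v with
  | inl (inl _) => None
  | inl (inr i) => Some (vR n)
  | inr (inl (i, j)) => Some (vA i)
  | inr (inr (i, j, l)) => Some (vB i j)
  end.

Definition depV n (v : V n) : nat :=
  match v with
  | inl (inl _) => 0
  | inl (inr i) => 1
  | inr (inl (i, j)) => 2
  | inr (inr (i, j, l)) => 3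
  end.

Definition eV n : rel (V n) := [rel a b | (parV a == Some b) || (parV b == Some a)].

Lemma depV_par n (x y : V n) : parV x = Some y -> depV x = (depV y).+1.
Proof.
by case: x => [[[]|i]|[[i j]|[[i j] l]]] /= e; inversion e; subst.
Qed.

Lemma pigeon n (h : 'I_n.+2 -> nat) :
  (forall a b, a != b -> h a != h b) -> (forall a, 2 <= h a <= n.+2) -> False.
Proof.
move=> hinj hr.
pose g := fun a : 'I_n.+2 => (inord (h a - 2) : 'I_n.+1).
have ginj : injective g.
  move=> a b /(congr1 (@nat_of_ord _)); rewrite /g !inordK; last 2 first.
  - by have := hr b; lia.
  - by have := hr a; lia.
  move=> e; apply/eqP; apply: contraT => /hinj; have := hr a; have := hr b; lia.
by have := @leq_card _ _ g ginj; rewrite !card_ord ltnn.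
Qed.

Lemma noncol n : ~ packing_colorable setT (@eV n) n.+2.
Proof.
move=> [c [h1 h2]].
have hr : forall v, 1 <= c v <= n.+2 by move=> v; apply: h1; rewrite in_setT.
have walk : forall u v s, u != v -> path (@eV n) u s -> last u s = v ->
    size s <= c u -> c u = c v -> False.
  move=> u v s neq hp hl hs eqc.
  by apply: (h2 u v (in_setT u) (in_setT v) neq eqc); exists s.
have step1 : forall i j, c (vB i j) != 1.
  move=> i j; apply/eqP => cb.
  apply: (@pigeon n (fun l => c (vC i j l))).
    move=> l l' nl; apply/eqP => eqc.
    apply: (walk (vC i j l) (vC i j l') [:: vB i j; vC i j l']) => //.
    + by apply: contra nl => /eqP [->].
    + by rewrite /= /eV /= !eqxx ?orbT.
    + rewrite /=; case: (eqVneq (c (vC i j l)) 1) => [e1|ne1].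
        exfalso; apply: (walk (vC i j l) (vB i j) [:: vB i j]) => //.
        by rewrite /= /eV /= !eqxx. by rewrite e1. by rewrite e1 cb.
      have := hr (vC i j l); lia.
  move=> l; have := hr (vC i j l); case: (eqVneq (c (vC i j l)) 1) => [e1|ne1].
    exfalso; apply: (walk (vC i j l) (vB i j) [:: vB i j]) => //.
    by rewrite /= /eV /= !eqxx. by rewrite e1. by rewrite e1 cb.
  lia.
have distB : forall i j j', j != j' -> c (vB i j) != c (vB i j').
  move=> i j j' nj; apply/eqP => eqc.
  apply: (walk (vB i j) (vB i j') [:: vA i; vB i j']) => //.
  + by apply: contra nj => /eqP [->].
  + by rewrite /= /eV /= !eqxx ?orbT.
  + have := step1 i j; have := hr (vB i j); rewrite /=; lia.
have step2 : forall i, exists j, 4 <= c (vB i j).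
  move=> i; apply: NNPP => hne.
  have hlt : forall j, c (vB i j) < 4.
    by move=> j; rewrite ltnNge; apply/negP => hj; apply: hne; exists j.
  pose o0 := @Ordinal 3 0 isT; pose o1 := @Ordinal 3 1 isT; pose o2 := @Ordinal 3 2 isT.
  have d01 := distB i o0 o1 isT; have d02 := distB i o0 o2 isT; have d12 := distB i o1 o2 isT.
  have := hlt o0; have := hlt o1; have := hlt o2.
  have := step1 i o0; have := step1 i o1; have := step1 i o2.
  have := hr (vB i o0); have := hr (vB i o1); have := hr (vB i o2).
  move: d01 d02 d12; lia.
pose J := fun i => odflt ord0 [pick j | 4 <= c (vB i j)].
have hJ : forall i, 4 <= c (vB i (J i)).
  move=> i; rewrite /J; case: pickP => [j hj //|none].
  by have [j hj] := step2 i; move: (none j); rewrite hj.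
apply: (@pigeon n (fun i => c (vB i (J i)))).
  move=> i i' ni; apply/eqP => eqc.
  apply: (walk (vB i (J i)) (vB i' (J i')) [:: vA i; vR n; vA i'; vB i' (J i')]) => //.
  + by apply: contra ni => /eqP [->].
  + by rewrite /= /eV /= !eqxx ?orbT.
move=> i; have := hJ i; have := hr (vB i (J i)); lia.
Qed.

Theorem corollary3p6 (k : nat) (hk : 2 <= k) :
  exists (T : finType) (e : rel T),
    is_tree e /\ chi_rho_eq [set: T] e k /\ chi_rho_critical e.
Proof.
case: k hk => [|[|n]] // hk.
apply: (@main_gen n.+2 hk _ (V n) (@eV n) (leqnn _)).
- by move=> a b; rewrite /eV /= orbC.
- move=> a; rewrite /eV /= orbb; apply/negP => /eqP /depV_par; lia.
- exact: (par_acyclic (@depV_par n)).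
- move=> hc; apply: (@noncol n); apply: colorable_mono hc; lia.
Qed.
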